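(* Let $P$ and $Q$ be lower primes. Then $PQ-QP$ lies in the two-sided ideal of $\mathcal{A}$ generated by $\{(RL)D-D(RL) : D \text{ a lower prime}\}$.
   Context: $\mathcal{A}$ is the free associative $\mathbb{C}$-algebra on noncommuting generators $L,R$; words are finite products of these letters. A word is balanced if it contains equally many $L$'s and $R$'s. A word is prime if it is nonempty, balanced, and not a product of two nonempty balanced words. For a balanced word $W=a_1\cdots a_n$, $e_k(W)=\sum_{i=1}^k\overline{a_i}$ with $\overline{R}=1$, $\overline{L}=-1$. A prime $P$ of length $n$ is a lower prime if $e_k(P)<0$ for all $1\le k\le n-1$. *)

(* Defs.v *)
(* free associative algebra C<L,R> = monoid algebra {malg C[word]}
   over the free monoid word := seq bool, with C = R[i] for R : realType (= complex numbers). *)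
From HB Require Import structures.
From mathcomp Require Import all_boot all_order all_algebra.
From mathcomp Require Import reals complex.
From mathcomp.multinomials Require Import monalg.

Set Implicit Arguments.
Unset Strict Implicit.
Unset Printing Implicit Defensive.

Import Order.TTheory GRing.Theory Num.Theory.

(* Letters: true = R, false = L.  Words = elements of the free monoid on {L, R}. *)
Definition word := seq bool.
HB.instance Definition _ := Choice.on word.

Lemma word_unit (x y : word) : x ++ y = [::] -> x = [::] /\ y = [::].
Proof. by case: x => // ; case: y. Qed.

HB.instance Definition _ :=
  Choice_isMonomialDef.Build word (@catA bool) (@cat0s bool) (@cats0 bool) word_unit.

Definition letterL : word := [:: false].
Definition letterR : word := [:: true].

Definition freeAlg (C : fieldType) := {malg C[word]}.

Definition wd (C : fieldType) (w : word) : freeAlg C := << w >>%R.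

Definition balanced (w : word) : bool := count_mem true w == count_mem false w.

Definition prime_word (w : word) : Prop :=
  [/\ w != [::], balanced w &
      ~ exists u v : word, [/\ u != [::], v != [::], balanced u, balanced v & w = u ++ v]].

Definition letter_val (a : bool) : int := if a then 1%R else (-1)%R.

Definition ek (k : nat) (w : word) : int :=
  (\sum_(i < k) letter_val (nth false w i))%R.

Definition lower_prime (P : word) : Prop :=
  prime_word P /\ forall k : nat, (1 <= k)%N -> (k <= size P - 1)%N -> (ek k P < 0)%R.

Definition in_twosided_ideal (A : ringType) (S : A -> Prop) (x : A) : Prop :=
  exists l : seq (A * A * A),
    (forall t, t \in l -> S t.1.2) /\
    x = (\sum_(t <- l) t.1.1 * t.1.2 * t.2)%R.

(* Main.v *)
Require Import Defs.
From HB Require Import structures.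
From mathcomp Require Import all_boot all_order all_algebra.
From mathcomp Require Import reals complex.
From mathcomp.multinomials Require Import monalg.
From mathcomp Require Import zify.
Import Order.TTheory GRing.Theory Num.Theory.
Set Implicit Arguments.
Unset Strict Implicit.
Local Open Scope ring_scope.

Definition hw (w : word) : int := foldr (fun a s => letter_val a + s) 0 w.

Lemma hw_cat u v : hw (u ++ v) = hw u + hw v.
Proof. elim: u => [|a u IH] /=; first by rewrite add0r. by rewrite IH addrA. Qed.

Lemma hw_count w : hw w = (count_mem true w)%:Z - (count_mem false w)%:Z.
Proof. elim: w => [|a w IH] //=; rewrite IH; case: a => /=; lia. Qed.

Lemma balancedE w : balanced w = (hw w == 0).
Proof. by rewrite hw_count subr_eq0 /balanced. Qed.

Lemma ekE w k : (k <= size w)%N -> ek k w = hw (take k w).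
Proof.
elim: w k => [|a w IH] [|k] //=; rewrite /ek ?big_ord0 // => Hk.
rewrite big_ord_recl /=; congr (_ + _); exact: IH.
Qed.

Definition dyck (w : word) := hw w = 0 /\ forall k, hw (take k w) <= 0.

Lemma lower_strict B : lower_prime B -> forall k, (0 < k < size B)%N -> hw (take k B) < 0.
Proof.
move=> [_ H] k /andP[k0 kB]; rewrite -ekE; last by apply: ltnW.
apply: H => //; lia.
Qed.

Lemma lower_dyck P : lower_prime P -> dyck P.
Proof.
move=> lP; have [[_ bal _] _] := lP; move: bal; rewrite balancedE => /eqP h0.
split => // k; case: k => [|k]; first by rewrite take0.
case: (ltnP k.+1 (size P)) => kP.
  by apply: ltW; apply: lower_strict.
by rewrite take_oversize // h0.
Qed.

Lemma mk_lower w : w != [::] -> hw w = 0 ->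
  (forall k, (0 < k < size w)%N -> hw (take k w) < 0) -> lower_prime w.
Proof.
move=> wn h0 H; split.
  split => //; first by rewrite balancedE h0.
  move=> [u [v [un vn bu _ ew]]].
  have : (0 < size u < size w)%N.
    have su : (0 < size u)%N by rewrite lt0n size_eq0.
    have sv : (0 < size v)%N by rewrite lt0n size_eq0.
    by rewrite ew size_cat su /= -addn1 leq_add2l.
  move/H; rewrite ew take_size_cat //.
  by move: bu; rewrite balancedE => /eqP ->; rewrite ltxx.
move=> k k1 kw; rewrite ekE; last by move: (size w) kw; lia.
apply: H; have sw : (0 < size w)%N by rewrite lt0n size_eq0.
move: (size w) sw kw => n; lia.
Qed.

Lemma lower_split B : lower_prime B -> exists Y, B = false :: Y ++ [:: true] /\ dyck Y.
Proof.
move=> lB; have [h0 _] := lower_dyck lB; have St := lower_strict lB.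
move: lB h0 St; case: B => [[[]] //|a B'] _.
case/lastP: B' => [|Y c] h0 St.
  by move: h0 => /=; case: (a) => /eqP.
rewrite -cats1 in h0 St.
have sz : size (a :: Y ++ [:: c]) = (size Y).+2 by rewrite /= size_cat addn1.
rewrite sz in St.
have a0 : a = false.
  by have := St 1%N; rewrite /= take0 => /(_ isT); case: (a).
subst a.
have hY : hw Y < 1.
  have := St (size Y).+1; rewrite -cat_cons take_size_cat //= => H.
  have := H (ltnSn _); lia.
have hc : hw Y + letter_val c = 1.
  by move: h0; rewrite -cat_cons hw_cat /=; lia.
have c1 : c = true.
  by move: hc hY; case: (c) => //=; lia.
subst c; exists Y; split; first by rewrite cats1.
have hY0 : hw Y = 0 by move: hc => /=; lia.
split => // k; case: (leqP k (size Y)) => kY; last by rewrite take_oversize ?hY0 // ltnW.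
have := St k.+1; rewrite /= takel_cat // => H.
have := H ltac:(by rewrite !ltnS); lia.
Qed.

Lemma dyck_split X : dyck X -> X != [::] ->
  exists A B, [/\ X = A ++ B, dyck A & lower_prime B].
Proof.
move=> [hX pX] Xn.
pose P := fun i => (i < size X)%N && (hw (take i X) == 0).
have exP : exists i, P i by exists 0%N; rewrite /P take0 eqxx andbT lt0n size_eq0.
have ubP : forall i, P i -> (i <= size X)%N by move=> i /andP[/ltnW].
case: (ex_maxnP exP ubP) => j /andP[jX /eqP hj] jmax.
exists (take j X), (drop j X); split; first by rewrite cat_take_drop.
  by split => // k; rewrite -take_min.
have hcat := hw_cat (take j X) (drop j X); rewrite cat_take_drop hj hX add0r in hcat.
apply: mk_lower => //.
  by rewrite -size_eq0 size_drop; move: (size X) jX => n; lia.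
move=> k; rewrite size_drop => /andP[k0 kX].
have := pX (j + k)%N; rewrite takeD hw_cat hj add0r le_eqVlt => /orP[|//].
move=> /eqP hk; have : P (j + k)%N by rewrite /P takeD hw_cat hj add0r hk eqxx andbT; move: (size X) kX => n; lia.
move/jmax; lia.
Qed.

Lemma wd_cat (C : fieldType) (u v : word) : wd C (u ++ v) = wd C u * wd C v.
Proof. by rewrite /wd malgM_def fgmulUU mulr1. Qed.

Section Alg.
Variable C : fieldType.

Definition Sgen (x : freeAlg C) : Prop :=
  exists D : word, lower_prime D /\
    x = wd C (letterR ++ letterL) * wd C D - wd C D * wd C (letterR ++ letterL).

Definition Id (x : freeAlg C) := in_twosided_ideal Sgen x.

Lemma Id0 : Id 0.
Proof. by exists [::]; split => //; rewrite big_nil. Qed.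

Lemma IdD x y : Id x -> Id y -> Id (x + y).
Proof.
move=> [l1 [H1 ->]] [l2 [H2 ->]]; exists (l1 ++ l2); split; last by rewrite big_cat.
by move=> t; rewrite mem_cat => /orP[/H1|/H2].
Qed.

Lemma IdM a b x : Id x -> Id (a * x * b).
Proof.
move=> [l [H ->]]; exists (map (fun t => (a * t.1.1, t.1.2, t.2 * b)) l); split.
  by move=> t /mapP[t' t'in ->] /=; exact: H.
rewrite big_map mulr_sumr mulr_suml; apply: eq_bigr => t _; by rewrite !mulrA.
Qed.

Lemma IdS x : Sgen x -> Id x.
Proof.
move=> Sx; exists [:: (1, x, 1)]; split; first by move=> t; rewrite inE => /eqP ->.
by rewrite big_seq1 mul1r mulr1.
Qed.

Definition eqv x y := Id (x - y).

Lemma eqv_refl x : eqv x x.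
Proof. by rewrite /eqv subrr; exact: Id0. Qed.

Lemma eqv_sym x y : eqv x y -> eqv y x.
Proof.
move=> H; have := IdM (-1) 1 H; rewrite mulr1 mulN1r opprB; done.
Qed.

Lemma eqv_trans x y z : eqv x y -> eqv y z -> eqv x z.
Proof.
move=> H1 H2; have := IdD H1 H2; by rewrite /eqv addrA subrK.
Qed.

Lemma eqv_ctx a b x y : eqv x y -> eqv (a * x * b) (a * y * b).
Proof. move=> H; have := IdM a b H; by rewrite /eqv mulrBr mulrBl. Qed.

Lemma eqv_w p q u v : eqv (wd C u) (wd C v) -> eqv (wd C (p ++ u ++ q)) (wd C (p ++ v ++ q)).
Proof. move=> H; rewrite !wd_cat !mulrA; exact: eqv_ctx. Qed.

Lemma eqv_gen D : lower_prime D -> eqv (wd C ([:: true; false] ++ D)) (wd C (D ++ [:: true; false])).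
Proof. move=> lD; apply: IdS; exists D; split => //; by rewrite !wd_cat. Qed.

Lemma claimA n X : (size X <= n)%N -> dyck X ->
  eqv (wd C ([:: true; false] ++ X)) (wd C (X ++ [:: true; false])).
Proof.
elim: n X => [|n IH] X.
  by rewrite leqn0 size_eq0 => /eqP -> _; rewrite cats0; exact: eqv_refl.
move=> sX dX; have [->|Xn] := eqVneq X [::]; first by rewrite cats0; exact: eqv_refl.
have [A [B [eX dA lB]]] := dyck_split dX Xn; subst X.
have sB : (0 < size B)%N by rewrite lt0n size_eq0; case: lB => [[]].
apply: (@eqv_trans _ (wd C (A ++ [:: true; false] ++ B))).
  have := eqv_w [::] B (IH A _ dA); rewrite /= -!catA; apply.
  by move: sX; rewrite size_cat; move: (size A) (size B) sB => a b; lia.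
have := eqv_w A [::] (eqv_gen lB); rewrite !cats0 -!catA; apply.
Qed.

End Alg.

Lemma eqv_eq (C : fieldType) u u' v v' : u = u' -> v = v' ->
  eqv (wd C u) (wd C v) -> eqv (wd C u') (wd C v').
Proof. by move=> -> ->. Qed.

Lemma claimB (C : fieldType) n X Y : (size X + size Y <= n)%N -> dyck X -> dyck Y ->
  eqv (wd C (X ++ Y)) (wd C (Y ++ X)).
Proof.
elim: n X Y => [|n IH] X Y.
  rewrite leqn0 addn_eq0 !size_eq0 => /andP[/eqP -> /eqP ->] _ _; exact: eqv_refl.
have primecase : forall B Y, lower_prime B -> dyck Y -> (size B + size Y <= n.+1)%N ->
    eqv (wd C (B ++ Y)) (wd C (Y ++ B)).
  move=> B {}Y lB dY sz.
  have [->|Yn] := eqVneq Y [::]; first by rewrite cats0; exact: eqv_refl.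
  have [Cw [D [eY dC lD]]] := dyck_split dY Yn; subst Y.
  have [Y' [eB dY']] := lower_split lB.
  have [Z [eD dZ]] := lower_split lD.
  have sB : size B = (size Y').+2 by rewrite eB /= size_cat addn1.
  have sD : size D = (size Z).+2 by rewrite eD /= size_cat addn1.
  rewrite size_cat sB sD in sz.
  apply: (@eqv_trans C _ (wd C (Cw ++ B ++ D))).
    apply: (eqv_eq _ _ (eqv_w [::] D (IH B Cw _ (lower_dyck lB) dC))).
    - by rewrite /= catA.
    - by rewrite /= catA.
    - by rewrite sB; move: (size Y') (size Cw) (size Z) sz => a b c; lia.
  apply: (eqv_eq _ _ (@eqv_w C Cw [::] (B ++ D) (D ++ B) _)).
  - by rewrite cats0.
  - by rewrite cats0 catA.
  apply: (@eqv_trans C _ (wd C ([:: false; true; false] ++ Y' ++ Z ++ [:: true]))).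
    apply: (eqv_eq _ _ (eqv_w [:: false] (Z ++ [:: true]) (eqv_sym (claimA C (leqnn _) dY')))).
    - by rewrite ?eB ?eD /= -?catA.
    - by rewrite ?eB ?eD /= -?catA.
  apply: (@eqv_trans C _ (wd C ([:: false; true; false] ++ Z ++ Y' ++ [:: true]))).
    apply: (eqv_eq _ _ (eqv_w [:: false; true; false] [:: true] (IH Y' Z _ dY' dZ))).
    - by rewrite ?eB ?eD /= -?catA.
    - by rewrite ?eB ?eD /= -?catA.
    - by move: (size Y') (size Cw) (size Z) sz => a b c; lia.
  apply: (eqv_eq _ _ (eqv_w [:: false] (Y' ++ [:: true]) (claimA C (leqnn _) dZ))).
  - by rewrite ?eB ?eD /= -?catA.
  - by rewrite ?eB ?eD /= -?catA.
move=> sXY dX dY.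
have [->|Xn] := eqVneq X [::]; first by rewrite cats0; exact: eqv_refl.
have [A [B [eX dA lB]]] := dyck_split dX Xn; subst X.
have sB : (0 < size B)%N by rewrite lt0n size_eq0; case: lB => [[]].
rewrite size_cat in sXY.
apply: (@eqv_trans C _ (wd C (A ++ Y ++ B))).
  apply: (eqv_eq _ _ (eqv_w A [::] (primecase B Y lB dY _))).
  - by rewrite cats0 catA.
  - by rewrite cats0.
  - by move: (size A) (size B) (size Y) sXY => a b c; lia.
apply: (eqv_eq _ _ (eqv_w [::] B (IH A Y _ dA dY))).
- by rewrite /= catA.
- by rewrite /= catA.
- by move: (size A) (size B) (size Y) sXY sB => a b c; lia.
Qed.

Theorem lemma5p2 (R : realType) (P Q : word) :
  lower_prime P -> lower_prime Q ->
  in_twosided_ideal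
    (fun x : freeAlg R[i] =>
       exists D : word, lower_prime D /\
         x = wd R[i] (letterR ++ letterL) * wd R[i] D - wd R[i] D * wd R[i] (letterR ++ letterL))
    (wd R[i] P * wd R[i] Q - wd R[i] Q * wd R[i] P).
Proof.
move=> lP lQ.
have H := @claimB R[i] _ P Q (leqnn (size P + size Q)) (lower_dyck lP) (lower_dyck lQ).
rewrite /eqv !wd_cat in H.
exact H.
Qed.
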